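(* Let $\mathcal{G}_R$ be the class of all finite reflexive graphs and let $G\in\mathcal{G}_R$ be a reflexive graph not isomorphic to $N_{n,k}$ for any natural numbers $n,k$ with $2k\le n$. Then the class $\mathrm{Av}(G)=\{H\in\mathcal{G}_R: G\not\preceq H\}$, with respect to the strong homomorphic image ordering $\preceq$, is not well quasi-ordered.
   Context: A reflexive graph is a set with a symmetric edge relation having a loop at every vertex. A homomorphism maps edges to edges; it is strong if additionally every edge of the target between vertices of the image is the image of an edge. Strong homomorphic image ordering: $A\preceq B$ iff there is a surjective strong homomorphism $B\to A$. For $2k\le n$, $N_{n,k}$ is the reflexive graph on $\{1,\dots,n\}$ with all pairs of distinct vertices adjacent except $\{1,2\},\{3,4\},\dots,\{2k-1,2k\}$. Well quasi-ordered means no infinite strictly decreasing sequence and no infinite antichain; graphs considered up to isomorphism. *)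

(* Defs.v *)
From mathcomp Require Import all_boot.
Set Implicit Arguments. Unset Strict Implicit. Unset Printing Implicit Defensive.

Record rgr := RGraph {
  rg_n : nat;
  rg_e : rel 'I_rg_n;
  rg_sym : symmetric rg_e;
  rg_refl : reflexive rg_e }.

Definition vert (G : rgr) := 'I_(rg_n G).

Definition is_hom (B A : rgr) (f : vert B -> vert A) : Prop :=
  forall x y, rg_e x y -> rg_e (f x) (f y).

Definition is_strong_hom (B A : rgr) (f : vert B -> vert A) : Prop :=
  is_hom f /\
  forall x y : vert B, rg_e (f x) (f y) ->
    exists x' y' : vert B, [/\ f x' = f x, f y' = f y & rg_e x' y'].

Definition surj (B A : rgr) (f : vert B -> vert A) : Prop :=
  forall u : vert A, exists x, f x = u.

Definition sh_le (A B : rgr) : Prop :=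
  exists f : vert B -> vert A, surj f /\ is_strong_hom f.

Definition rg_iso (A B : rgr) : Prop :=
  exists f : vert A -> vert B, bijective f /\
    forall x y, rg_e (f x) (f y) = rg_e x y.

(* N_{n,k} on vertices 0..n-1 (vertex i corresponds to i+1): the non-edges are
   {2t,2t+1} for t < k. *)
Definition Nnk_e (n k : nat) : rel 'I_n :=
  fun i j => (i == j) || ~~ ((i./2 == j./2) && (i./2 < k)).

Arguments Nnk_e : clear implicits.

Lemma Nnk_sym n k : symmetric (Nnk_e n k).
Proof. move=> i j; rewrite /Nnk_e eq_sym [j./2 == _]eq_sym. by case: (i./2 =P j./2) => [->|]. Qed.

Lemma Nnk_refl n k : reflexive (Nnk_e n k).
Proof. by move=> i; rewrite /Nnk_e eqxx. Qed.

Arguments Nnk_sym : clear implicits.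
Arguments Nnk_refl : clear implicits.
Definition Nnk (n k : nat) : rgr := @RGraph n (Nnk_e n k) (Nnk_sym n k) (Nnk_refl n k).

Definition Av (G : rgr) (H : rgr) : Prop := ~ sh_le G H.

Definition wqo_on (P : rgr -> Prop) (le : rgr -> rgr -> Prop) : Prop :=
  (~ exists s : nat -> rgr, (forall i, P (s i)) /\
       forall i, le (s i.+1) (s i) /\ ~ le (s i) (s i.+1)) /\
  (~ exists s : nat -> rgr, (forall i, P (s i)) /\
       forall i j, i <> j -> ~ le (s i) (s j)).

(* Main.v *)
Require Import Defs.
From mathcomp Require Import all_boot.
From mathcomp Require Import zify.

Set Implicit Arguments. Unset Strict Implicit. Unset Printing Implicit Defensive.

Lemma half3 (a b c : nat) : a./2 = b./2 -> a./2 = c./2 -> a != b -> a != c -> b = c.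
Proof.
move=> hb hc /eqP nb /eqP nc.
have ea := odd_double_half a; have eb := odd_double_half b; have ec := odd_double_half c.
move: ea eb ec; rewrite -hb -hc.
case: (odd a); case: (odd b); case: (odd c) => /=; lia.
Qed.

Lemma Nnk_uniq n k (a b c : 'I_n) :
  ~~ Nnk_e n k a b -> ~~ Nnk_e n k a c -> b = c.
Proof.
rewrite /Nnk_e !negb_or !negbK => /andP [nb /andP [/eqP hb _]] /andP [nc /andP [/eqP hc _]].
apply: val_inj; exact: half3 hb hc nb nc.
Qed.

Section Iso.
Variable G : rgr.
Local Notation T := (vert G).
Hypothesis hU : forall x y z : T, ~~ rg_e x y -> ~~ rg_e x z -> y = z.

Definition pp (x : T) : T := odflt x [pick y | ~~ rg_e x y].

Lemma pP (x y : T) : (~~ rg_e x y) = (pp x != x) && (y == pp x).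
Proof.
rewrite /pp; case: pickP => [z Hz|H] /=.
- have zx : z != x.
    apply/eqP => zx; move: Hz; by rewrite zx rg_refl.
  rewrite zx /=; apply/idP/eqP => [Hy|->//]; exact: hU Hy Hz.
- by rewrite eqxx /= H.
Qed.

Lemma ppK : involutive pp.
Proof.
move=> x; case: (eqVneq (pp x) x) => [e|ne]; first by rewrite !e.
have : ~~ rg_e x (pp x) by rewrite pP ne eqxx.
rewrite rg_sym pP => /andP [_ /eqP] h; by rewrite -h.
Qed.

Definition LL := [set x : T | x < pp x].
Definition FF := [set x : T | pp x == x].
Definition UU := [set x : T | pp x < x].
Definition kk := #|LL|.
Definition rk (A : {set T}) (x : T) := #|[set y in A | y < x]|.
Definition mn (x : T) := if x < pp x then x else pp x.
Definition fn (x : T) : nat :=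
  if pp x == x then kk.*2 + rk FF x else (rk LL (mn x)).*2 + (pp x < x).

Lemma rk_lt (A : {set T}) (x : T) : x \in A -> rk A x < #|A|.
Proof.
move=> xA; apply: proper_card; apply/properP; split.
  by apply/subsetP => y; rewrite inE => /andP [].
by exists x => //; rewrite inE ltnn andbF.
Qed.

Lemma rk_mono (A : {set T}) (x y : T) : x \in A -> x < y -> rk A x < rk A y.
Proof.
move=> xA lt; apply: proper_card; apply/properP; split.
  apply/subsetP => z; rewrite !inE => /andP [-> /= h]; exact: ltn_trans h lt.
by exists x; rewrite !inE ?xA ?lt ?ltnn ?andbF.
Qed.

Lemma rk_inj (A : {set T}) (x y : T) : x \in A -> y \in A -> rk A x = rk A y -> x = y.
Proof.
move=> xA yA e; case: (ltngtP x y) => [lt|gt|eq].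
- by have := rk_mono xA lt; rewrite e ltnn.
- by have := rk_mono yA gt; rewrite e ltnn.
- exact: val_inj.
Qed.

Lemma ne_lt (x : T) : pp x != x -> (x < pp x) || (pp x < x).
Proof. move=> /eqP ne; have : (pp x : nat) <> x by move=> h; apply: ne; apply: val_inj. lia. Qed.

Lemma mnL (x : T) : pp x != x -> mn x \in LL.
Proof.
move=> ne; rewrite /mn inE; case: ifP => h //.
rewrite ppK; move: (ne_lt ne); by rewrite h.
Qed.

Lemma mn_eq (x y : T) : mn x = mn y -> y = x \/ y = pp x.
Proof.
rewrite /mn; case: ifP => _; case: ifP => _ h.
- by left.
- by right; rewrite h ppK.
- by right.
- by left; rewrite -(ppK x) h ppK.
Qed.

Lemma mn_pp (x : T) : mn (pp x) = mn x.
Proof.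
case: (eqVneq (pp x) x) => [->//|ne] /=.
rewrite /mn ppK; have := ne_lt ne.
case: (ltnP x (pp x)) => h1; case: (ltnP (pp x) x) => h2 //= _; lia.
Qed.

Lemma cardF : kk.*2 + #|FF| = rg_n G.
Proof.
have hC : ~: FF = LL :|: UU.
  apply/setP => x; rewrite !inE.
  case: (eqVneq (pp x) x) => [->|ne]; first by rewrite ltnn.
  by rewrite (ne_lt ne).
have hD : LL :&: UU = set0.
  apply/setP => x; rewrite !inE; apply/negP => /andP [h1 h2]; lia.
have hI : UU = pp @: LL.
  apply/setP => x; rewrite inE; apply/idP/imsetP.
  - move=> h; exists (pp x); by rewrite ?inE ?ppK.
  - by move=> [y]; rewrite inE => h ->; rewrite ppK.
have := cardsC FF; rewrite card_ord hC.
have := cardsUI LL UU; rewrite hD cards0 addn0 => ->.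
rewrite hI card_imset; last exact: can_inj ppK.
rewrite /kk; lia.
Qed.

Lemma fn_lt (x : T) : fn x < rg_n G.
Proof.
rewrite -cardF /fn; case: ifP => h.
  have : rk FF x < #|FF| by apply: rk_lt; rewrite inE h.
  lia.
have : rk LL (mn x) < kk by apply: rk_lt; apply: mnL; rewrite h.
case: (pp x < x) => /=; lia.
Qed.

Lemma fn_inj : injective fn.
Proof.
move=> x y; rewrite /fn.
case: (eqVneq (pp x) x) => hx; case: (eqVneq (pp y) y) => hy.
- move=> e; apply: (@rk_inj FF); rewrite ?inE ?hx ?hy //; lia.
- have : rk LL (mn y) < kk by apply: rk_lt; apply: mnL.
  case: (pp y < y) => /=; lia.
- have : rk LL (mn x) < kk by apply: rk_lt; apply: mnL.
  case: (pp x < x) => /=; lia.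
- move=> e.
  have e1 : rk LL (mn x) = rk LL (mn y).
    by move: e; case: (pp x < x); case: (pp y < y) => /=; lia.
  have := rk_inj (mnL hx) (mnL hy) e1 => /mn_eq [->//|hyx].
  move: e; rewrite e1 hyx ppK.
  have := ne_lt hx.
  case: (ltnP x (pp x)) => h1; case: (ltnP (pp x) x) => h2 //= _; lia.
Qed.

Definition gg (x : T) : 'I_(rg_n G) := Ordinal (fn_lt x).

Lemma iso_N : rg_iso G (Nnk (rg_n G) kk).
Proof.
exists gg; split.
  apply: injF_bij => x y /(congr1 val) /=; exact: fn_inj.
move=> x y /=; rewrite /Nnk_e /=.
case: (eqVneq x y) => [->|nxy]; first by rewrite eqxx rg_refl.
have -> : (gg x == gg y) = false.
  apply/negbTE/eqP => /(congr1 val) /= /fn_inj e; by rewrite e eqxx in nxy.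
rewrite /= -[rg_e x y]negbK pP; congr (~~ _).
rewrite /fn.
case: (eqVneq (pp x) x) => hx /=.
  apply/negbTE; apply/negP => /andP [_]; lia.
have hlx : rk LL (mn x) < kk by apply: rk_lt; apply: mnL.
have -> : ((rk LL (mn x)).*2 + (pp x < x))./2 = rk LL (mn x).
  by case: (pp x < x) => /=; lia.
rewrite hlx andbT.
case: (eqVneq (pp y) y) => hy /=.
  have -> : (y == pp x) = false.
    apply/eqP => e; move: hy; rewrite e ppK => e2.
    by rewrite -e2 eqxx in hx.
  apply/eqP => e; move: hlx; rewrite e; lia.
have hly : rk LL (mn y) < kk by apply: rk_lt; apply: mnL.
have -> : ((rk LL (mn y)).*2 + (pp y < y))./2 = rk LL (mn y).
  by case: (pp y < y) => /=; lia.
apply/eqP/eqP => [e|->]; last by rewrite mn_pp.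
have [e2|//] := mn_eq (rk_inj (mnL hx) (mnL hy) e).
by rewrite e2 eqxx in nxy.
Qed.

End Iso.

Lemma partner (a : nat) (u : 'I_(a.*2)) :
  exists v : 'I_(a.*2), v != u /\ ~~ Nnk_e (a.*2) a u v.
Proof.
have hu := ltn_ord u.
have eu := odd_double_half u.
have hv : (if odd u then u.-1 else u.+1) < a.*2.
  by move: eu hu; case: (odd u) => /=; lia.
exists (Ordinal hv); split.
  apply/eqP => /(congr1 val) /=; move: eu; case: (odd u) => /=; lia.
rewrite /Nnk_e /= negb_or negbK; apply/andP; split.
  apply/eqP => /(congr1 val) /=; move: eu; case: (odd u) => /=; lia.
apply/andP; split.
  apply/eqP; move: eu; case: (odd u) => /=; lia.
move: eu hu; case: (odd u) => /=; lia.
Qed.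

Theorem theorem3p5 (G : rgr) :
  (forall n k : nat, 2 * k <= n -> ~ rg_iso G (Nnk n k)) ->
  ~ wqo_on (Av G) sh_le.
Proof.
move=> hG [_ hA]; apply: hA.
exists (fun i => Nnk (i.+1).*2 i.+1); split.
- move=> i [f [fs [fh _]]].
  have hU : forall x y z : vert G, ~~ rg_e x y -> ~~ rg_e x z -> y = z.
    move=> x y z hxy hxz.
    have [a ha] := fs x; have [b hb] := fs y; have [c hc] := fs z; subst x y z.
    suff -> : b = c by [].
    apply: (@Nnk_uniq _ i.+1 a).
      by apply: contra hxy; apply: fh.
    by apply: contra hxz; apply: fh.
  apply: (hG (rg_n G) (kk G)); last exact: iso_N hU.
  have := cardF hU; lia.
- move=> i j nij [f [fs [fh _]]].
  have finj : injective f.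
    move=> x1 x2 e.
    have [v [vne vnon]] := partner (f x1).
    have [y hy] := fs v.
    have h1 : ~~ rg_e y x1.
      rewrite rg_sym; apply: contra vnon => h; rewrite -hy; exact: fh.
    have h2 : ~~ rg_e y x2.
      rewrite rg_sym; apply: contra vnon => h; rewrite -hy e; exact: fh.
    exact: (@Nnk_uniq _ j.+1 y).
  have himg : f @: [set: vert (Nnk (j.+1).*2 j.+1)] = [set: vert (Nnk (i.+1).*2 i.+1)].
    apply/setP => u; rewrite inE; have [x <-] := fs u; apply: imset_f; by rewrite inE.
  have := card_imset [set: vert (Nnk (j.+1).*2 j.+1)] finj.
  rewrite himg !cardsT !card_ord /= => e.
  apply: nij; lia.
Qed.
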